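(* Let $\Delta$ be a constant, $\delta \in (0,1)$ and $N \geq 1$. Fix a tree $\mathbb{T}$ rooted at $v$ with maximum degree $\Delta$, and let $S = \mathrm{boundary}_{\mathbb{T}, \delta}(v, N)$. Then $|S| \leq T(N) = \widetilde{O}\big(N^{1 - \log \frac{1}{1-\delta}/ \log \frac{\Delta}{1-\delta}}\big)$ and $\mathsf{depth}_{\mathbb{T}}(S) \leq O\big(\log_{\frac{\Delta-1}{1-\delta}}(N)\big)$, where $T(N)$ is the maximum of $|\mathrm{boundary}_{\mathbb{T}', \delta}(v', N)|$ over all trees $\mathbb{T}'$ of maximum degree $\Delta$ and roots $v'$.
   Context: For a rooted tree $\mathbb T$ and $\delta\in(0,1)$, the procedure $\mathrm{boundary}_{\mathbb T,\delta}(u,N)$ is defined recursively: let $C$ be the set of children of $u$ and $d=|C|$; if $N\le1$ return $\{u\}$; else if $C=\emptyset$ return $\emptyset$; else return $\bigcup_{w\in C}\mathrm{boundary}_{\mathbb T_w,\delta}(w,N\cdot\frac{1-\delta}{d})$, where $\mathbb T_w$ is the subtree rooted at $w$. For $S$ a set of vertices, $\mathsf{depth}_{\mathbb T}(S)=\max_{u\in S}\mathrm{dist}_{\mathbb T}(v,u)$ with $v$ the root. $\widetilde O$ and $O$ hide polylogarithmic factors and constants depending on $\Delta,\delta$. *)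

(* Defs.v *)
From Stdlib Require Import Reals List.
Import ListNotations.
Open Scope R_scope.

Inductive tree : Type := Node : list tree -> tree.

(* A vertex of a tree is addressed by the path of child indices from the root;
   the root is [] and dist(root, u) = length of u's address. *)
Definition vertex := list nat.

(* boundary_{T,delta}(u, N) for the subtree t rooted at u, returning the
   addresses (relative to u) of the selected vertices. *)
Fixpoint boundary (delta : R) (t : tree) (N : R) {struct t} : list vertex :=
  match t with
  | Node cs =>
    if Rle_dec N 1 then [ [] ]
    else
      match cs with
      | [] => []
      | _ =>
        let d := length cs in
        (fix go (i : nat) (l : list tree) {struct l} : list vertex :=
           match l with
           | [] => []
           | c :: l' =>
               map (cons i) (boundary delta c (N * (1 - delta) / INR d)) ++ go (S i) l'
           end) 0%nat cs
      end
  end.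

Definition card (S : list vertex) : nat :=
  length (nodup (list_eq_dec Nat.eq_dec) S).

Definition depth (S : list vertex) : nat := fold_right Nat.max 0%nat (map (@length nat) S).

Fixpoint children_le (k : nat) (t : tree) {struct t} : Prop :=
  match t with
  | Node cs =>
    (length cs <= k)%nat /\
    (fix F (l : list tree) : Prop :=
       match l with [] => True | c :: l' => children_le k c /\ F l' end) cs
  end.

(* Maximum (graph) degree at most Delta: the root has at most Delta
   neighbours (children), every other vertex has its parent plus at most
   Delta - 1 children. *)
Definition max_degree_le (Delta : nat) (t : tree) : Prop :=
  match t with
  | Node cs => (length cs <= Delta)%nat /\ Forall (children_le (Delta - 1)) cs
  end.

(* Main.v *)
Require Import Defs.
From Stdlib Require Import Reals List Lra Lia ZArith.
Import ListNotations.
Open Scope R_scope.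

Section Go.
Variable f : tree -> list vertex.
Fixpoint go (i : nat) (l : list tree) : list vertex :=
  match l with [] => [] | c :: l' => map (cons i) (f c) ++ go (S i) l' end.
End Go.

Lemma boundary_eq delta cs N : boundary delta (Node cs) N =
  if Rle_dec N 1 then [ [] ] else match cs with [] => [] | _ =>
   go (fun c => boundary delta c (N * (1 - delta) / INR (length cs))) 0%nat cs end.
Proof. reflexivity. Qed.

Fixpoint tree_ind2 (P : tree -> Prop) (H : forall cs, Forall P cs -> P (Node cs)) t : P t :=
  match t with Node cs => H cs ((fix F l := match l return Forall P l with
     [] => Forall_nil _ | c :: l' => Forall_cons _ (tree_ind2 P H c) (F l') end) cs) end.

Lemma cl_forall k cs : children_le k (Node cs) -> (length cs <= k)%nat /\ Forall (children_le k) cs.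
Proof.
  intro H. split. { simpl in H. tauto. }
  revert H. induction cs as [|c cs IH]; intro H; constructor.
  - simpl in H. tauto.
  - apply IH. simpl in H |- *. destruct H as [Hl [Hc HF]]. split; [lia|exact HF].
Qed.

Lemma cl_build k cs : (length cs <= k)%nat -> Forall (children_le k) cs -> children_le k (Node cs).
Proof.
  induction cs as [|c cs IH]; intros Hl HF; simpl; split; auto.
  inversion HF; subst. split; auto.
  assert (Hl' : (length cs <= k)%nat) by (simpl in Hl; lia).
  specialize (IH Hl' H2). simpl in IH. tauto.
Qed.

Lemma cl_mono k k' t : (k <= k')%nat -> children_le k t -> children_le k' t.
Proof.
  intro Hk. induction t as [cs IH] using tree_ind2. intro H.
  apply cl_forall in H. destruct H as [Hl HF]. apply cl_build; [lia|].
  clear Hl. induction cs as [|c cs IHc]; constructor; inversion IH; inversion HF; subst; auto.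

Qed.

Lemma go_length f i l K : Forall (fun x => INR (length (f x)) <= K) l ->
  INR (length (go f i l)) <= INR (length l) * K.
Proof.
  revert i. induction l as [|x l IH]; intros i H; simpl.
  - lra.
  - inversion H; subst. rewrite length_app, length_map, plus_INR.
    specialize (IH (S i) H3). replace (match length l with 0%nat => 1 | S _ => INR (length l) + 1 end) with (INR (S (length l))) by reflexivity. rewrite S_INR, Rmult_plus_distr_r, Rmult_1_l. unfold vertex in *. lra.
Qed.

Lemma depth_in v s : In v s -> (length v <= depth s)%nat.
Proof.
  unfold depth; induction s as [|w s IH]; simpl; [tauto|]. intros [->|H]; [lia|]. specialize (IH H). lia.
Qed.

Lemma depth_le s n : (forall v, In v s -> (length v <= n)%nat) -> (depth s <= n)%nat.
Proof.
  unfold depth; induction s as [|w s IH]; simpl; intro H; [lia|].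
  assert (length w <= n)%nat by auto. assert (depth s <= n)%nat by auto. unfold depth in *. lia.
Qed.

Lemma go_in f i l v : In v (go f i l) -> exists x w j, In x l /\ In w (f x) /\ v = j :: w.
Proof.
  revert i. induction l as [|x l IH]; simpl; intros i H; [tauto|].
  apply in_app_or in H. destruct H as [H|H].
  - apply in_map_iff in H. destruct H as [w [<- Hw]]. exists x, w, i. auto.
  - destruct (IH _ H) as [y [w [j [H1 [H2 H3]]]]]. exists y, w, j. auto.
Qed.

Lemma depth_lemma delta (Hd : 0 < delta < 1) n : forall t M,
  M * (1 - delta) ^ n <= 1 -> (depth (boundary delta t M) <= n)%nat.
Proof.
  induction n as [|n IH]; intros [cs] M HM; rewrite boundary_eq;
   destruct (Rle_dec M 1) as [H1|H1]; try (unfold depth; simpl; lia).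
  - simpl in HM. lra.
  - destruct cs as [|c cs']; [unfold depth; simpl; lia|].
    apply depth_le. intros v Hv. apply go_in in Hv.
    destruct Hv as [x [w [j [Hx [Hw ->]]]]]. simpl.
    assert (length w <= n)%nat; [|lia].
    apply (Nat.le_trans _ (depth (boundary delta x (M * (1 - delta) / INR (length (c :: cs')))))).
    + apply depth_in; auto.
    + apply IH. simpl in HM.
      assert (1 <= INR (length (c :: cs'))) by (change (length (c::cs')) with (S (length cs')); rewrite S_INR; pose proof (pos_INR (length cs')); lra).
      set (d := INR (length (c :: cs'))) in *.
      assert (0 <= (1-delta)^n) by (apply pow_le; lra).
      assert (M * (1 - delta) / d * (1 - delta) ^ n <= M * ((1 - delta) * (1 - delta) ^ n)); [|lra].
      assert (0 <= M * (1 - delta) * (1 - delta) ^ n) by (apply Rmult_le_pos; [apply Rmult_le_pos|]; lra).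
      replace (M * (1 - delta) / d * (1 - delta) ^ n) with ((M * (1 - delta) * (1 - delta) ^ n) * / d) by (unfold Rdiv; ring).
      replace (M * ((1 - delta) * (1 - delta) ^ n)) with (M * (1 - delta) * (1 - delta) ^ n) by ring.
      assert (0 < /d <= 1) by (split; [apply Rinv_0_lt_compat; lra| rewrite <- Rinv_1; apply Rinv_le_contravar; lra]).
      assert (0 <= (1-delta)) by lra. nra.
Qed.

Lemma exp_le' x y : x <= y -> exp x <= exp y.
Proof. intro H. destruct (Rle_lt_or_eq_dec _ _ H) as [H' | ->]; [left; apply exp_increasing; auto|lra]. Qed.
Lemma ln_le' x y : 0 < x -> x <= y -> ln x <= ln y.
Proof. intros H0 H. destruct (Rle_lt_or_eq_dec _ _ H) as [H' | ->]; [left; apply ln_increasing; auto|lra]. Qed.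
Lemma ln_pos' x : 1 < x -> 0 < ln x.
Proof. intro H. rewrite <- ln_1. apply ln_increasing; lra. Qed.
Lemma ln_div' x y : 0 < x -> 0 < y -> ln (x / y) = ln x - ln y.
Proof. intros. unfold Rdiv. rewrite ln_mult, ln_Rinv; try lra. apply Rinv_0_lt_compat; auto. Qed.

Section Count.
Variables (Delta : nat) (delta : R).
Hypothesis HD : (2 <= Delta)%nat.
Hypothesis Hd : 0 < delta < 1.
Let q := 1 - delta.
Let A := ln (1 / q).
Let B := ln (INR Delta / q).
Let p := 1 - A / B.
Let m0 := q / INR Delta.
Let c := exp (- (p * ln m0)).

Lemma facts : 0 < q < 1 /\ 2 <= INR Delta /\ 0 < A /\ B = ln (INR Delta) + A /\ 0 < ln (INR Delta) /\ 0 < B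
  /\ 0 <= p /\ 0 < m0.
Proof.
  assert (0 < q < 1) by (unfold q; lra).
  assert (2 <= INR Delta) by (replace 2 with (INR 2) by (simpl; lra); apply le_INR; auto).
  assert (HA: A = - ln q) by (unfold A; unfold Rdiv; rewrite Rmult_1_l, ln_Rinv; lra).
  assert (0 < A) by (rewrite HA; assert (ln q < 0) by (rewrite <- ln_1; apply ln_increasing; lra); lra).
  assert (HB: B = ln (INR Delta) + A) by (unfold B; rewrite ln_div', HA; lra).
  assert (0 < ln (INR Delta)) by (apply ln_pos'; lra).
  assert (0 < B) by lra.
  repeat split; try lra.
  - unfold p. assert (A / B <= 1); [|lra]. apply (Rmult_le_reg_r B); auto.
    unfold Rdiv. rewrite Rmult_assoc, Rinv_l; lra.
  - unfold m0. apply Rdiv_lt_0_compat; lra.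
Qed.

Lemma key d M : 1 <= d <= INR Delta -> 0 < M -> d * Rpower (M * q / d) p <= Rpower M p.
Proof.
  intros Hdd HM. destruct facts as (Hq & HD2 & HA & HB & HlD & HBp & Hp & Hm0).
  unfold Rpower. rewrite <- (exp_ln d) at 1 by lra. rewrite <- exp_plus. apply exp_le'.
  rewrite ln_div', ln_mult; try lra; [| apply Rmult_lt_0_compat; lra].
  assert (Hlq : ln q = - A) by (unfold A; unfold Rdiv; rewrite Rmult_1_l, ln_Rinv; lra).
  rewrite Hlq.
  assert (E : ln d + p * (ln M + - A - ln d) = p * ln M + A / B * (ln d - ln (INR Delta))).
  { unfold p. rewrite HB. field. lra. }
  rewrite E.
  assert (ln d <= ln (INR Delta)) by (apply ln_le'; lra).
  assert (0 < A / B) by (apply Rdiv_lt_0_compat; lra).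
  nra.
Qed.

Lemma count_lemma t : children_le Delta t -> forall M, m0 < M ->
  INR (length (boundary delta t M)) <= c * Rpower M p.
Proof.
  destruct facts as (Hq & HD2 & HA & HB & HlD & HBp & Hp & Hm0).
  induction t as [cs IH] using tree_ind2. intros Hc M HM.
  apply cl_forall in Hc. destruct Hc as [Hl HF].
  assert (Hpos : 0 < c * Rpower M p) by (unfold c, Rpower; apply Rmult_lt_0_compat; apply exp_pos).
  rewrite boundary_eq. destruct (Rle_dec M 1) as [H1|H1].
  - simpl. unfold c, Rpower. rewrite <- exp_plus. rewrite <- exp_0. apply exp_le'.
    assert (ln m0 <= ln M) by (apply ln_le'; lra). nra.
  - destruct cs as [|c0 cs'].
    + simpl. lra.
    + set (d := INR (length (c0 :: cs'))).
      assert (Hd1 : 1 <= d) by (unfold d; change (length (c0::cs')) with (S (length cs')); rewrite S_INR; pose proof (pos_INR (length cs')); lra).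
      assert (HdD : d <= INR Delta) by (unfold d; apply le_INR; auto).
      change (length (c0 :: cs')) with (length (c0 :: cs')) in d.
      apply Rle_trans with (d * (c * Rpower (M * q / d) p)).
      * apply go_length. apply Forall_forall. intros x Hx.
        rewrite Forall_forall in IH, HF.
        apply IH; auto. unfold m0.
        apply Rle_lt_trans with (q / d).
        -- unfold Rdiv. apply Rmult_le_compat_l; [lra|]. apply Rinv_le_contravar; lra.
        -- unfold Rdiv. assert (0 < /d) by (apply Rinv_0_lt_compat; lra).
           assert (0 < q * /d) by (apply Rmult_lt_0_compat; lra). nra.
      * assert (0 < c) by (unfold c; apply exp_pos).
        pose proof (key d M (conj Hd1 HdD) ltac:(lra)).
        replace (d * (c * Rpower (M * q / d) p)) with (c * (d * Rpower (M * q / d) p)) by ring.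
        apply Rmult_le_compat_l; lra.
Qed.
End Count.

Lemma card_le S : (card S <= length S)%nat.
Proof. unfold card. apply NoDup_incl_length; [apply NoDup_nodup|]. intros x Hx. apply nodup_In in Hx. auto. Qed.

Theorem proposition3p6 (Delta : nat) (delta : R) :
  (2 <= Delta)%nat -> 0 < delta < 1 ->
  exists (C : R) (k : nat) (N0 : R),
    0 < C /\
    forall (t : tree) (N : R),
      max_degree_le Delta t -> 1 <= N -> N0 <= N ->
      INR (card (boundary delta t N))
        <= C * Rpower N (1 - ln (1 / (1 - delta)) / ln (INR Delta / (1 - delta)))
             * (ln N) ^ k
      /\
      INR (depth (boundary delta t N))
        <= C * (ln N / ln ((INR Delta - 1) / (1 - delta))).
Proof.
  intros HD Hd.
  destruct (facts Delta delta HD Hd) as (Hq & HD2 & HA & HB & HlD & HBp & Hp & Hm0).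
  set (q := 1 - delta) in *.
  set (A := ln (1 / q)) in *.
  set (p := 1 - A / ln (INR Delta / q)) in *.
  set (m0 := q / INR Delta) in *.
  set (c := exp (- (p * ln m0))).
  set (L := ln ((INR Delta - 1) / q)).
  assert (HL : 0 < L).
  { unfold L. apply ln_pos'. apply (Rmult_lt_reg_r q); [lra|].
    unfold Rdiv. rewrite Rmult_assoc, Rinv_l; lra. }
  assert (Hc : 0 < c) by (unfold c; apply exp_pos).
  assert (HiA : 0 < 1 / A) by (apply Rdiv_lt_0_compat; lra).
  exists (c + (1 / A + 1) * L), 0%nat, (exp 1).
  split; [nra|].
  intros t N Hmax HN1 HN0.
  assert (HlnN : 1 <= ln N).
  { rewrite <- (ln_exp 1). apply ln_le'; auto. apply exp_pos. }
  split.
  - apply Rle_trans with (INR (length (boundary delta t N))); [apply le_INR, card_le|].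
    assert (Hm01 : m0 < N).
    { unfold m0. apply Rlt_le_trans with 1; [|lra]. apply (Rmult_lt_reg_r (INR Delta)); [lra|].
      unfold Rdiv. rewrite Rmult_assoc, Rinv_l; lra. }
    assert (Hct : children_le Delta t).
    { destruct t as [cs]. destruct Hmax as [Hl HF]. apply cl_build; auto.
      eapply Forall_impl; [|exact HF]. intros a. apply cl_mono. lia. }
    pose proof (count_lemma Delta delta HD Hd t Hct N Hm01) as Hcnt.
    fold q A m0 p c in Hcnt. simpl pow. rewrite Rmult_1_r.
    assert (0 < Rpower N p) by (unfold Rpower; apply exp_pos).
    assert (0 <= (1 / A + 1) * L) by nra. nra.
  - set (x := ln N / A).
    assert (Hx : 0 < x) by (unfold x; apply Rdiv_lt_0_compat; lra).
    destruct (archimed x) as [Hu1 Hu2].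
    assert (Hu0 : (0 <= up x)%Z) by (apply le_IZR; lra).
    set (n := Z.to_nat (up x)).
    assert (Hn : INR n = IZR (up x)) by (unfold n; rewrite INR_IZR_INZ, Z2Nat.id; auto).
    assert (Hdep : (depth (boundary delta t N) <= n)%nat).
    { apply depth_lemma; auto. fold q.
      rewrite <- Rpower_pow by lra. unfold Rpower.
      assert (Hlq : ln q = - A) by (unfold A; unfold Rdiv; rewrite Rmult_1_l, ln_Rinv; lra).
      rewrite Hlq. rewrite <- (exp_ln N) at 1 by lra. rewrite <- exp_plus, <- exp_0. apply exp_le'.
      assert (ln N <= INR n * A); [|nra].
      assert (ln N = x * A) by (unfold x; field; lra). nra. }
    apply le_INR in Hdep.
    assert (HxA : x * A = ln N) by (unfold x; field; lra).
    assert (Hx2 : x <= ln N / A) by (unfold x; lra).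
    assert (E : (c + (1 / A + 1) * L) * (ln N / L) = c * (ln N / L) + (x + ln N)).
    { rewrite <- HxA. field. lra. }
    rewrite E.
    assert (0 <= c * (ln N / L)) by (apply Rmult_le_pos; [lra|]; left; apply Rdiv_lt_0_compat; lra).
    lra.
Qed.
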